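(* Let $\mathcal{G}$ be an $N$-player continuous concave game with pseudo-gradient $U$ (setting in the context). For each player $p$ let $\vartheta^p$ satisfy the regularizer assumption (with strong convexity constant $\rho>0$), let $\epsilon>0$, let $C_\epsilon=(C^p_\epsilon)_{p}$ be the induced mirror map, and let $h(x)=\sum_{p}\vartheta^p(x^p)$ with Bregman divergence $D_h$. Suppose $\mathcal{G}$ is $\mu$-relatively hypo-monotone with respect to $h$, and suppose $\overline x=(\overline x^p)_p\in\mathrm{relint}(\Omega)$ is the unique interior perturbed Nash equilibrium, i.e. $\overline x=C_\epsilon(U(\overline x))$. Let $\gamma>0$, $\epsilon>\mu$, $z(0)\in\mathbb{R}^n$, and let $z(t)$ solve the discounted mirror descent dynamics $\dot z=\gamma(-z+U(x))$, $x=C_\epsilon(z)$, with $x(t)=C_\epsilon(z(t))$ and $x_0=x(0)=C_\epsilon(z(0))$. Then $x(t)\to\overline x$ with $$D_h(\overline x,x(t))\le e^{-\gamma(\epsilon-\mu)\epsilon^{-1}t}D_h(\overline x,x_0),$$ and $$\|\overline x-x(t)\|_2^2\le 2\rho^{-1}e^{-\gamma(\epsilon-\mu)\epsilon^{-1}t}D_h(\overline x,x_0).$$ In particular, for $\mu=0$ (the null monotone case, $(U(x)-U(x'))^\top(x-x')=0$ for all $x,x'$), $\|\overline x-x(t)\|_2^2\le 2\rho^{-1}e^{-\gamma t}D_h(\overline x,x_0)$.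
   Context: Game setting: players $\mathcal{N}=\{1,\dots,N\}$; strategy sets $\Omega^p\subseteq\mathbb{R}^{n_p}$ nonempty, compact, convex; $\Omega=\prod_p\Omega^p\subseteq\mathbb{R}^n$; payoffs $\mathcal{U}^p:\Omega\to\mathbb{R}$ jointly continuous, concave and continuously differentiable in $x^p$ for each fixed $x^{-p}$; pseudo-gradient $U(x)=(\nabla_{x^p}\mathcal{U}^p(x))_p$, assumed $L$-Lipschitz on $\Omega$. Regularizer assumption: $\vartheta^p:\mathbb{R}^{n_p}\to\mathbb{R}\cup\{\infty\}$ closed, proper, $\rho$-strongly convex (Euclidean norm), $\mathrm{dom}(\vartheta^p)=\Omega^p$. Mirror map: $C^p_\epsilon(z^p)=\arg\max_{y^p\in\Omega^p}[{y^p}^\top z^p-\epsilon\vartheta^p(y^p)]$. A perturbed NE $\overline x=C_\epsilon(U(\overline x))$ is a Nash equilibrium of the game with payoffs $\mathcal{U}^p-\epsilon\vartheta^p$. Bregman divergence $D_h(x,y)=h(x)-h(y)-\nabla h(y)^\top(x-y)$; $\mathrm{dom}(\partial h)=\{x:\partial h(x)\ne\varnothing\}$. $\mathcal{G}$ is $\mu$-relatively hypo-monotone w.r.t. $h$ if $(U(x)-U(x'))^\top(x-x')\le\mu(D_h(x,x')+D_h(x',x))$ for all $x,x'\in\mathrm{dom}(\partial h)$. *)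

(* Defs.v *)
From mathcomp Require Import all_boot all_order all_algebra.
From mathcomp Require Import all_classical all_reals all_analysis.
Unset Printing Implicit Defensive.
Import Order.TTheory GRing.Theory Num.Theory.
Import numFieldNormedType.Exports.
Local Open Scope ring_scope.
Local Open Scope classical_set_scope.

Definition dotv {R : realType} {T : finType} (u v : T -> R) : R :=
  \sum_(i : T) u i * v i.

Definition sqnorm {R : realType} {T : finType} (u : T -> R) : R := dotv u u.

Definition vsub {R : realType} {T : finType} (u v : T -> R) : T -> R :=
  fun i => u i - v i.

Definition vcomb {R : realType} {T : finType} (l : R) (u v : T -> R) : T -> R :=
  fun i => l * u i + (1 - l) * v i.

Definition convex_set {R : realType} {T : finType} (S : set (T -> R)) : Prop :=
  forall x y, S x -> S y -> forall l : R, 0 <= l <= 1 -> S (vcomb l x y).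

Definition closed_set {R : realType} {T : finType} (S : set (T -> R)) : Prop :=
  forall x, (forall e : R, 0 < e -> exists y, S y /\ sqnorm (vsub x y) < e) -> S x.

Definition bounded_set {R : realType} {T : finType} (S : set (T -> R)) : Prop :=
  exists M : R, forall x, S x -> sqnorm x <= M.

(* compact subset of R^T (Heine-Borel) *)
Definition compact_set {R : realType} {T : finType} (S : set (T -> R)) : Prop :=
  closed_set S /\ bounded_set S.

Definition aff_hull {R : realType} {T : finType} (S : set (T -> R)) : set (T -> R) :=
  fun y => exists (k : nat) (s : 'I_k -> T -> R) (l : 'I_k -> R),
    (forall j, S (s j)) /\ \sum_(j < k) l j = 1 /\
    forall i, y i = \sum_(j < k) l j * s j i.

Definition relint {R : realType} {T : finType} (S : set (T -> R)) : set (T -> R) :=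
  fun x => S x /\ exists delta : R, 0 < delta /\
    forall y, aff_hull S y -> sqnorm (vsub y x) < delta -> S y.

(* A closed proper function with dom = S is represented by its (real) values
   on S; it is +oo outside S.  Closedness = lower semicontinuity, which for the
   extended function with closed domain S amounts to lsc of the restriction. *)
Definition lsc_on {R : realType} {T : finType} (S : set (T -> R)) (f : (T -> R) -> R) : Prop :=
  forall x, S x -> forall e : R, 0 < e -> exists delta : R, 0 < delta /\
    forall y, S y -> sqnorm (vsub y x) < delta -> f x - e < f y.

Definition strongly_convex_on {R : realType} {T : finType} (S : set (T -> R)) (rho : R)
    (f : (T -> R) -> R) : Prop :=
  forall x y, S x -> S y -> forall l : R, 0 <= l <= 1 ->
    f (vcomb l x y) <= l * f x + (1 - l) * f y
                       - rho / 2 * l * (1 - l) * sqnorm (vsub x y).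

Definition regularizer {R : realType} {T : finType} (S : set (T -> R)) (rho : R)
    (f : (T -> R) -> R) : Prop :=
  lsc_on S f /\ strongly_convex_on S rho f.

Definition is_mirror_point {R : realType} {T : finType} (S : set (T -> R)) (eps : R)
    (f : (T -> R) -> R) (z y : T -> R) : Prop :=
  S y /\ forall y', S y' -> dotv y' z - eps * f y' <= dotv y z - eps * f y.

(* joint index set: coordinate j of player p;  R^n = R^{n_1} x ... x R^{n_N} *)
Definition Idx {N : nat} (d : 'I_N -> nat) : finType := {p : 'I_N & 'I_(d p)}.

Definition block {R : realType} {N : nat} {d : 'I_N -> nat} (x : Idx d -> R) (p : 'I_N)
  : 'I_(d p) -> R := fun j => x (existT (fun q : 'I_N => 'I_(d q)) p j).

Definition inOmega {R : realType} {N : nat} {d : 'I_N -> nat}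
    (Om : forall p : 'I_N, set ('I_(d p) -> R)) (x : Idx d -> R) : Prop :=
  forall p, Om p (block x p).

Definition mirror_map_rel {R : realType} {N : nat} {d : 'I_N -> nat}
    (Om : forall p : 'I_N, set ('I_(d p) -> R))
    (th : forall p : 'I_N, ('I_(d p) -> R) -> R) (eps : R)
    (z x : Idx d -> R) : Prop :=
  forall p, is_mirror_point (Om p) eps (th p) (block z p) (block x p).

(* h(x) = sum_p th^p(x^p)  (finite on Omega, +oo outside) *)
Definition hsum {R : realType} {N : nat} {d : 'I_N -> nat}
    (th : forall p : 'I_N, ('I_(d p) -> R) -> R) (x : Idx d -> R) : R :=
  \sum_(p < N) th p (block x p).

Definition subgrad_h {R : realType} {N : nat} {d : 'I_N -> nat}
    (Om : forall p : 'I_N, set ('I_(d p) -> R))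
    (th : forall p : 'I_N, ('I_(d p) -> R) -> R) (x g : Idx d -> R) : Prop :=
  inOmega Om x /\
  forall y, inOmega Om y -> hsum th x + dotv g (vsub y x) <= hsum th y.

(* Bregman divergence D_h(x,y) = h(x) - h(y) - g^T (x - y), g = "grad h(y)" *)
Definition bregman {R : realType} {N : nat} {d : 'I_N -> nat}
    (th : forall p : 'I_N, ('I_(d p) -> R) -> R) (x y g : Idx d -> R) : R :=
  hsum th x - hsum th y - dotv g (vsub x y).

(* mu-relative hypo-monotonicity w.r.t. h, for all x, x' in dom(dh) and
   every choice of (sub)gradients *)
Definition rel_hypo_monotone {R : realType} {N : nat} {d : 'I_N -> nat}
    (Om : forall p : 'I_N, set ('I_(d p) -> R))
    (th : forall p : 'I_N, ('I_(d p) -> R) -> R)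
    (U : (Idx d -> R) -> Idx d -> R) (mu : R) : Prop :=
  forall x x' g g', subgrad_h Om th x g -> subgrad_h Om th x' g' ->
    dotv (vsub (U x) (U x')) (vsub x x') <=
      mu * (bregman th x x' g' + bregman th x' x g).

(* continuous concave game with pseudo-gradient U, L-Lipschitz on Omega.
   Payoffs are defined on all of R^n (so partial derivatives make sense at
   points of Omega). *)
Definition concave_game {R : realType} {N : nat} {d : 'I_N -> nat}
    (Om : forall p : 'I_N, set ('I_(d p) -> R))
    (u : 'I_N -> (Idx d -> R) -> R)
    (U : (Idx d -> R) -> Idx d -> R) (L : R) : Prop :=
  (forall p, Om p !=set0 /\ compact_set (Om p) /\ convex_set (Om p)) /\
  (forall p x, inOmega Om x -> forall e : R, 0 < e -> exists delta : R, 0 < delta /\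
     forall y, inOmega Om y -> sqnorm (vsub y x) < delta -> `|u p y - u p x| < e) /\
  (forall p x y, inOmega Om x -> inOmega Om y ->
     (forall q, q != p -> block x q = block y q) ->
     forall l : R, 0 <= l <= 1 ->
       l * u p x + (1 - l) * u p y <= u p (vcomb l x y)) /\
  (forall x, inOmega Om x -> forall i : Idx d,
     is_derive (0 : R) (1 : R)
       (fun s : R => u (projT1 i) (fun k => x k + (if k == i then s else 0)))
       (U x i)) /\
  0 <= L /\
  (forall x y, inOmega Om x -> inOmega Om y ->
     sqnorm (vsub (U x) (U y)) <= L ^+ 2 * sqnorm (vsub x y)).

(* Main.v *)
Require Import Defs.
From mathcomp Require Import all_boot all_order all_algebra.
From mathcomp Require Import all_classical all_reals all_analysis.
From mathcomp Require Import ring lra.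
Import Order.TTheory GRing.Theory Num.Theory.
Import numFieldNormedType.Exports.
Local Open Scope ring_scope.
Local Open Scope classical_set_scope.

Section Dot.
Context {R : realType} {T : finType}.
Implicit Types u v w : T -> R.

Lemma dotvC u v : dotv u v = dotv v u.
Proof. by apply: eq_bigr => i _; rewrite mulrC. Qed.

Lemma dotvBl u v w : dotv (vsub u v) w = dotv u w - dotv v w.
Proof. by rewrite /dotv -sumrB; apply: eq_bigr => i _; rewrite /vsub mulrBl. Qed.

Lemma dotvBr u v w : dotv w (vsub u v) = dotv w u - dotv w v.
Proof. by rewrite /dotv -sumrB; apply: eq_bigr => i _; rewrite /vsub mulrBr. Qed.

Lemma dotv_divl u v (c : R) : dotv (fun i => u i / c) v = dotv u v / c.
Proof. by rewrite /dotv mulr_suml; apply: eq_bigr => i _; rewrite mulrAC. Qed.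

Lemma sqnorm_ge0 u : 0 <= sqnorm u.
Proof. by apply: sumr_ge0 => i _; rewrite -expr2 sqr_ge0. Qed.

Lemma sqnormB u v : sqnorm (vsub u v) = sqnorm (vsub v u).
Proof. by apply: eq_bigr => i _; rewrite /vsub; ring. Qed.

Lemma dotv_young u v (c : R) : 0 < c ->
  dotv u v <= c / 2 * sqnorm u + sqnorm v / (2 * c).
Proof.
move=> c0; rewrite /sqnorm /dotv mulr_sumr mulr_suml -big_split /=.
apply: ler_sum => i _.
have h : 0 <= (c * u i - v i) ^+ 2 by apply: sqr_ge0.
have e : c / 2 * (u i * u i) + v i * v i / (2 * c) - u i * v i
   = (c * u i - v i) ^+ 2 / (2 * c).
  by field; rewrite gt_eqF.
rewrite -subr_ge0 e; apply: divr_ge0 => //; lra.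
Qed.

Lemma dotv_mull u v (c : R) : dotv (fun i => c * u i) v = c * dotv u v.
Proof. by rewrite /dotv mulr_sumr; apply: eq_bigr => i _; rewrite mulrA. Qed.

End Dot.
Section Calc.
Context {R : realType} {T : finType}.

Lemma quotE (f : R -> R) (t : R) :
  (fun h : R => h^-1 *: ((f \o shift t) (h *: 1) - f t)) =
  (fun h => h^-1 * (f (h + t) - f t)).
Proof. by apply/funext => h /=; rewrite [h *: 1]mulr1. Qed.

Lemma derive_quot (f : R -> R) (t l : R) : is_derive t 1 f l ->
  (fun h => h^-1 * (f (h + t) - f t)) @ 0^' --> l.
Proof. by move=> [df <-]; move: df; rewrite /derivable /derive quotE. Qed.

Lemma is_derive_of_cvg (f : R -> R) (t l : R) :
  (fun h => h^-1 * (f (h + t) - f t)) @ 0^' --> l -> is_derive t 1 f l.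
Proof.
move=> H; apply: DeriveDef; rewrite /derivable /derive quotE.
  exact: cvgP H.
exact: cvg_lim H.
Qed.

Lemma cvg_dotv {U : Type} {F : set_system U} {FF : Filter F}
  {w : U -> T -> R} {a : T -> R} (c : T -> R) :
  (forall i, w x i @[x --> F] --> a i) ->
  dotv (w x) c @[x --> F] --> dotv a c.
Proof.
move=> H; rewrite /dotv; apply: (@cvg_big _ _ +%R 0 xpredT add_continuous) => // i _.
exact: cvgMr_tmp.
Qed.

Lemma cvg_sqnorm {U : Type} {F : set_system U} {FF : Filter F}
  {w : U -> T -> R} {a : T -> R} :
  (forall i, w x i @[x --> F] --> a i) ->
  sqnorm (w x) @[x --> F] --> sqnorm a.
Proof.
move=> H; rewrite /sqnorm /dotv; apply: (@cvg_big _ _ +%R 0 xpredT add_continuous) => // i _.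
exact: cvgM.
Qed.

End Calc.
Section Calc2.
Context {R : realType} {T : finType}.

Lemma cvg_absh : `|h| @[h --> (0 : R)^'] --> (0 : R).
Proof.
rewrite -[X in _ --> X](@normr0 _ R); apply: cvg_within_filter; apply: cvg_norm.
exact: cvg_id.
Qed.

Lemma sqnorm_scale (h : R) (v : T -> R) :
  sqnorm (fun i => h * v i) = h * h * sqnorm v.
Proof. by rewrite /sqnorm dotv_mull dotvC dotv_mull mulrA. Qed.

Lemma deriv_by_bound (D : R -> R) (Z : R -> T -> R) (t K : R) (zt' c : T -> R) :
  0 < t ->
  (forall i, is_derive t 1 (fun s => Z s i) (zt' i)) ->
  (forall s, 0 <= s -> `|D s - D t - dotv (vsub (Z s) (Z t)) c| <=
                         K * sqnorm (vsub (Z s) (Z t))) ->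
  is_derive t 1 D (dotv zt' c).
Proof.
move=> t0 Hz Hb; apply: is_derive_of_cvg.
pose w := fun h i => h^-1 * (Z (h + t) i - Z t i).
have Hw : forall i, w h i @[h --> 0^'] --> zt' i.
  by move=> i; have := derive_quot _ _ _ (Hz i); rewrite /w /=; exact.
have HA : dotv (w h) c @[h --> 0^'] --> dotv zt' c by apply: cvg_dotv.
have HB : K * (`|h| * sqnorm (w h)) @[h --> 0^'] --> (0 : R).
  have : K * (`|h| * sqnorm (w h)) @[h --> 0^'] --> K * (0 * sqnorm zt').
    apply: cvgMl_tmp; apply: cvgM; [exact: cvg_absh | exact: cvg_sqnorm].
  by rewrite mul0r mulr0.
pose q := fun h => h^-1 * (D (h + t) - D t).
pose A := fun h => dotv (w h) c.
have HE : (fun h => q h - A h) @ 0^' --> (0 : R).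
  apply: (@squeeze_cvgr _ _ _ _ (fun h => - (K * (`|h| * sqnorm (w h))))
                 (fun h => K * (`|h| * sqnorm (w h)))); last exact: HB.
    near=> h.
    have hn : h != 0 by near: h; exact: nbhs_dnbhs_neq.
    have ht : `|h| < t by near: h; exact: dnbhs0_lt.
    have s0 : 0 <= h + t.
      have hh : - h <= `|h| by rewrite -normrN; exact: ler_norm.
      lra.
    have := Hb _ s0.
    have eA : A h = h^-1 * dotv (vsub (Z (h + t)) (Z t)) c by exact: dotv_mull.
    have eS : sqnorm (w h) = h^-1 * h^-1 * sqnorm (vsub (Z (h + t)) (Z t))
      by exact: sqnorm_scale.
    rewrite /q eA eS -mulrBr -ler_norml normrM.
    set X := (X in `|X|).
    set S := sqnorm _.
    have -> : `|h| * (h^-1 * h^-1 * S) = `|h^-1| * S.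
      case: (ltrgtP h 0) => [hneg|hpos|h0]; last by rewrite h0 eqxx in hn.
        by rewrite ltr0_norm ?invr_lt0 // ltr0_norm //; field.
      by rewrite gtr0_norm ?invr_gt0 // gtr0_norm //; field.
    by move=> hX; rewrite mulrCA; apply: ler_wpM2l.
  have := cvgN HB; rewrite oppr0; exact.
have -> : (fun h => h^-1 * (D (h + t) - D t)) = (fun h => (q h - A h) + A h).
  by apply/funext => h; rewrite subrK.
have := cvgD HE HA; rewrite add0r; exact.
Unshelve. all: by end_near.
Qed.

Lemma cont_by_bound {U : Type} (F : set_system U) {FF : Filter F}
  (D : R -> R) (Z : R -> T -> R) (t K : R) (c : T -> R) (g : U -> R) :
  (forall i, Z (g u) i @[u --> F] --> Z t i) ->
  (\forall u \near F, `|D (g u) - D t - dotv (vsub (Z (g u)) (Z t)) c| <=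
                         K * sqnorm (vsub (Z (g u)) (Z t))) ->
  D (g u) @[u --> F] --> D t.
Proof.
move=> Hz Hb.
have Hw : forall i, vsub (Z (g u)) (Z t) i @[u --> F] --> 0.
  move=> i; rewrite -(subrr (Z t i)); apply: cvgD => //; exact: cvg_cst.
have HA : dotv (vsub (Z (g u)) (Z t)) c @[u --> F] --> dotv (fun=> 0) c by apply: cvg_dotv.
have HB : K * sqnorm (vsub (Z (g u)) (Z t)) @[u --> F] --> (0 : R).
  have : K * sqnorm (vsub (Z (g u)) (Z t)) @[u --> F] --> K * sqnorm (fun _ : T => (0:R)).
    apply: cvgMl_tmp; exact: cvg_sqnorm.
  by rewrite /sqnorm /dotv big1 ?mulr0 // => i _; rewrite mulr0.
have HE : (fun u => D (g u) - D t - dotv (vsub (Z (g u)) (Z t)) c) @ F --> (0 : R).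
  apply: (@squeeze_cvgr _ _ _ _ (fun u => - (K * sqnorm (vsub (Z (g u)) (Z t))))
                 (fun u => K * sqnorm (vsub (Z (g u)) (Z t)))); last exact: HB.
    by apply: filterS Hb => u; rewrite ler_norml.
  have := cvgN HB; rewrite oppr0; exact.
have -> : (fun u => D (g u)) = (fun u => (D (g u) - D t - dotv (vsub (Z (g u)) (Z t)) c)
    + (dotv (vsub (Z (g u)) (Z t)) c + D t)).
  by apply/funext => u; rewrite addrA subrK subrK.
have e0 : dotv (fun=> 0) c = 0 :> R.
  by rewrite /dotv big1 // => i _; rewrite mul0r.
rewrite e0 in HA.
have H2 : (fun u => dotv (vsub (Z (g u)) (Z t)) c + D t) @ F --> 0 + D t.
  have := cvgD HA (cvg_cst (D t)); exact.
have := cvgD HE H2; rewrite !add0r; exact.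
Unshelve. all: by end_near.
Qed.

End Calc2.
Section Conv.
Context {R : realType}.

Lemma cvg_from_exp (f : R -> R) (l C k : R) : 0 < k -> 0 <= C ->
  (forall t, 0 <= t -> (l - f t) ^+ 2 <= C * expR (- (k * t))) ->
  f t @[t --> +oo] --> l.
Proof.
move=> k0 C0 H; apply/cvgrPdist_lt => e e0.
have e20 : 0 < e * e by rewrite mulr_gt0.
near=> t.
have t0 : 0 <= t by near: t; apply: nbhs_pinfty_ge; rewrite num_real.
have tM : C / (k * (e * e)) < t by near: t; apply: nbhs_pinfty_gt; rewrite num_real.
have h := H t t0.
have X1 : 1 + k * t <= expR (k * t) := expR_ge1Dx _.
have XY : expR (- (k * t)) * expR (k * t) = 1 by rewrite -expRD addNr expR0.
have Y0 : 0 < expR (- (k * t)) := expR_gt0 _.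
have CM : C < k * (e * e) * t.
  by move: tM; rewrite ltr_pdivrMr ?mulr_gt0 // => hh; nra.
have kt0 : 0 <= k * t by rewrite mulr_ge0 // ltW.
have h2 : C * expR (- (k * t)) < e * e.
  have : C < e * e * expR (k * t) by nra.
  move=> hc.
  have : C * expR (- (k * t)) < e * e * expR (k * t) * expR (- (k * t)).
    by rewrite ltr_pM2r.
  by rewrite -mulrA [expR (k * t) * _]mulrC XY mulr1.
set a := l - f t in h *.
case: (ltP `|a| e) => // hge; exfalso.
have : e * e <= `|a| * `|a| by nra.
rewrite -[`|a| * `|a|]expr2 real_normK ?num_real // => ha.
lra.
Unshelve. all: by end_near.
Qed.

End Conv.
Section Game.
Context {R : realType} {N : nat} {d : 'I_N -> nat}.
Variables (Om : forall p : 'I_N, set ('I_(d p) -> R))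
          (th : forall p : 'I_N, ('I_(d p) -> R) -> R) (rho eps : R).
Hypothesis rho0 : 0 < rho.
Hypothesis eps0 : 0 < eps.
Hypothesis reg : forall p, regularizer (Om p) rho (th p).
Hypothesis cvx : forall p, Defs.convex_set (Om p).

Lemma dotv_block (u v : Idx d -> R) :
  dotv u v = \sum_(p < N) dotv (block u p) (block v p).
Proof.
rewrite /dotv /block.
rewrite (@sig_big_dep R 0 _ _ (fun i => 'I_(d i)) xpredT (fun _ _ => true)
   (fun p j => u (existT _ p j) * v (existT _ p j))) /=.
by apply: eq_bigr => -[p j].
Qed.

Lemma mirror_full {z x : Idx d -> R} : mirror_map_rel Om th eps z x ->
  inOmega Om x /\ forall y, inOmega Om y ->
    dotv y z - eps * hsum th y <= dotv x z - eps * hsum th x.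
Proof.
move=> H; split; first by move=> p; exact: (H p).1.
move=> y Hy; rewrite !(dotv_block _ z) /hsum !mulr_sumr -!sumrB.
by apply: ler_sum => p _; apply: (H p).2; apply: Hy.
Qed.

Lemma mirror_subgrad {z x : Idx d -> R} : mirror_map_rel Om th eps z x ->
  subgrad_h Om th x (fun i => z i / eps).
Proof.
move=> /mirror_full [Hx H]; split => // y Hy.
have := H y Hy; rewrite dotv_divl dotvBr (dotvC z y) (dotvC z x) => h.
have : (dotv y z - dotv x z) / eps <= hsum th y - hsum th x.
  by rewrite ler_pdivrMr //; nra.
lra.
Qed.

Lemma inOmega_vcomb {x y : Idx d -> R} {l} : inOmega Om x -> inOmega Om y ->
  0 <= l <= 1 -> inOmega Om (vcomb l x y).
Proof. move=> hx hy hl p; have := @cvx p _ _ (hx p) (hy p) l hl; exact. Qed.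

Lemma hsum_strong {x y : Idx d -> R} {l} : inOmega Om x -> inOmega Om y ->
  0 <= l <= 1 ->
  hsum th (vcomb l x y) <= l * hsum th x + (1 - l) * hsum th y
                       - rho / 2 * l * (1 - l) * sqnorm (vsub x y).
Proof.
move=> hx hy hl; rewrite /sqnorm dotv_block /hsum !mulr_sumr -big_split -sumrB /=.
apply: ler_sum => p _; exact: (reg p).2.
Qed.

Lemma strong_bregman {x y g : Idx d -> R} : subgrad_h Om th x g ->
  inOmega Om y -> rho / 2 * sqnorm (vsub y x) <= bregman th y x g.
Proof.
move=> [hx hg] hy.
set a := rho / 2 * sqnorm (vsub y x); set D := bregman th y x g.
have key : forall l, 0 < l <= 1 -> (1 - l) * a <= D.
  move=> l /andP[l0 l1].
  have hl : 0 <= l <= 1 by rewrite l1 ltW.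
  have h1 := hg _ (inOmega_vcomb hy hx hl).
  have h2 := hsum_strong hy hx hl.
  have e : dotv g (vsub (vcomb l y x) x) = l * dotv g (vsub y x).
    by rewrite /dotv mulr_sumr; apply: eq_bigr => i _; rewrite /vsub /vcomb; ring.
  rewrite e in h1.
  have h3 : l * ((1 - l) * a) <= l * D.
    rewrite /a /D /bregman; nra.
  by rewrite ler_pM2l in h3.
have D0 : 0 <= D by have := key 1; rewrite subrr mul0r; apply; lra.
case: (lerP a D) => // aD; exfalso.
have a0 : 0 < a by lra.
pose l := (a - D) / (2 * a).
have l0 : 0 < l by rewrite /l divr_gt0 //; lra.
have l1 : l <= 1 by rewrite /l ler_pdivrMr; lra.
have := key l; rewrite l0 l1 => /(_ isT).
have -> : (1 - l) * a = (a + D) / 2 by rewrite /l; field; rewrite gt_eqF.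
lra.
Qed.

Lemma mirror_strong {z z' x x' : Idx d -> R} :
  mirror_map_rel Om th eps z x -> mirror_map_rel Om th eps z' x' ->
  eps * rho * sqnorm (vsub x x') <= dotv (vsub x x') (vsub z z').
Proof.
move=> H H'.
have g := mirror_subgrad H; have g' := mirror_subgrad H'.
have h1 := strong_bregman g g'.1.
have h2 := strong_bregman g' g.1.
rewrite /bregman !dotv_divl !dotvBr in h1 h2.
rewrite (sqnormB x' x) in h1.
rewrite !dotvBl !dotvBr (dotvC x z) (dotvC x z') (dotvC x' z) (dotvC x' z').
set S := sqnorm _ in h1 h2 *.
have : rho * S * eps <= dotv z x - dotv z x' - (dotv z' x - dotv z' x').
  rewrite -ler_pdivlMr //.
  have -> : (dotv z x - dotv z x' - (dotv z' x - dotv z' x')) / eps =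
    (dotv z x - dotv z x') / eps - (dotv z' x - dotv z' x') / eps by field; rewrite gt_eqF.
  lra.
lra.
Qed.

Lemma mirror_lip {z z' x x' : Idx d -> R} :
  mirror_map_rel Om th eps z x -> mirror_map_rel Om th eps z' x' ->
  dotv (vsub x x') (vsub z z') <= sqnorm (vsub z z') / (eps * rho).
Proof.
move=> H H'.
have h1 := mirror_strong H H'.
have c0 : 0 < eps * rho by rewrite mulr_gt0.
have h2 := dotv_young (vsub x x') (vsub z z') _ c0.
set P := dotv _ _ in h1 h2 *.
have : P * (eps * rho) <= sqnorm (vsub z z').
  have e : sqnorm (vsub z z') / (2 * (eps * rho)) * (eps * rho) = sqnorm (vsub z z') / 2.
    by field; rewrite (gt_eqF rho0) (gt_eqF eps0).
  nra.
by rewrite -ler_pdivlMr.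
Qed.

Definition psi (x z : Idx d -> R) := dotv x z - eps * hsum th x.

Lemma psi_bound {zs zt xs xt : Idx d -> R} :
  mirror_map_rel Om th eps zs xs -> mirror_map_rel Om th eps zt xt ->
  0 <= psi xs zs - psi xt zt - dotv xt (vsub zs zt) <=
       sqnorm (vsub zs zt) / (eps * rho).
Proof.
move=> Hs Ht.
have [xs0 hs] := mirror_full Hs; have [xt0 ht] := mirror_full Ht.
have a := hs _ xt0; have b := ht _ xs0.
have c := mirror_lip Hs Ht.
rewrite !dotvBl !dotvBr in c *.
rewrite /psi; apply/andP; split.
  lra.
lra.
Qed.

Lemma D_bound {zs zt xs xt : Idx d -> R} (xb : Idx d -> R) :
  mirror_map_rel Om th eps zs xs -> mirror_map_rel Om th eps zt xt ->
  `|bregman th xb xs (fun i => zs i / eps) - bregman th xb xt (fun i => zt i / eps)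
     - dotv (vsub zs zt) (fun i => (xt i - xb i) / eps)| <=
   1 / (eps * eps * rho) * sqnorm (vsub zs zt).
Proof.
move=> Hs Ht; have /andP[l u] := psi_bound Hs Ht.
rewrite /psi !dotvBr (dotvC xs zs) (dotvC xt zt) (dotvC xt zs) in l u.
have -> : (fun i => (xt i - xb i) / eps) = (fun i => vsub xt xb i / eps) by [].
rewrite (dotvC (vsub zs zt)) dotv_divl dotvBl !dotvBr (dotvC xt zs) (dotvC xt zt)
  (dotvC xb zs) (dotvC xb zt).
rewrite /bregman !dotv_divl !dotvBr.
set S := sqnorm _ in u *.
set hs := hsum th xs in l u *; set ht := hsum th xt in l u *.
set a2 := dotv zs xs in l u *; set a4 := dotv zt xt in l u *.
set a5 := dotv zs xt in l u *.
set Dl := (X in 0 <= X) in l u.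
rewrite [X in `|X|](_ : _ = Dl / eps); last first.
  by rewrite /Dl; field; rewrite (gt_eqF eps0).
rewrite ger0_norm ?divr_ge0 ?(ltW eps0) // ler_pdivrMr //.
have -> : 1 / (eps * eps * rho) * S * eps = S / (eps * rho).
  by field; rewrite (gt_eqF rho0) (gt_eqF eps0).
exact: u.
Qed.

Lemma sq_le_sqnorm {T : finType} (u : T -> R) i : u i ^+ 2 <= sqnorm u.
Proof.
rewrite /sqnorm /dotv (bigD1 i) //= -expr2 lerDl.
by apply: sumr_ge0 => j _; rewrite -expr2 sqr_ge0.
Qed.

End Game.

Lemma is_derive_lin {R : realType} (k t : R) : is_derive t 1 (fun s => k * s) k.
Proof.
have := @is_deriveZ R R R id k t 1 1 (is_derive_id t 1).
by rewrite [k *: 1]mulr1.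
Qed.

Lemma is_deriveM' {R : realType} {f g : R -> R} {t a b : R} :
  is_derive t 1 f a -> is_derive t 1 g b ->
  is_derive t 1 (fun s => f s * g s) (f t * b + g t * a).
Proof.
move=> hf hg; have H := is_deriveM hf hg.
have e : (f * g) = (fun s : R => f s * g s) by apply/funext => s.
by rewrite -e.
Qed.

Theorem mainTheorem4 (R : realType) (N : nat) (d : 'I_N -> nat)
    (Om : forall p : 'I_N, set ('I_(d p) -> R))
    (u : 'I_N -> (Idx d -> R) -> R)
    (U : (Idx d -> R) -> Idx d -> R) (L : R)
    (th : forall p : 'I_N, ('I_(d p) -> R) -> R)
    (rho eps mu gamma : R)
    (xbar : Idx d -> R)
    (z x : R -> Idx d -> R) :
  concave_game Om u U L ->
  0 < rho ->
  (forall p, regularizer (Om p) rho (th p)) ->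
  0 < eps ->
  rel_hypo_monotone Om th U mu ->
  (* xbar is the unique interior perturbed Nash equilibrium *)
  (forall p, relint (Om p) (block xbar p)) ->
  mirror_map_rel Om th eps (U xbar) xbar ->
  (forall y, (forall p, relint (Om p) (block y p)) ->
     mirror_map_rel Om th eps (U y) y -> y = xbar) ->
  0 < gamma ->
  mu < eps ->
  (* x(t) = C_eps(z(t)) and z solves  z' = gamma (-z + U(x))  for t >= 0 *)
  (forall t : R, 0 <= t -> mirror_map_rel Om th eps (z t) (x t)) ->
  (forall i : Idx d, (fun s => z s i) s @[s --> 0^'+] --> z 0 i) ->
  (forall t : R, 0 < t -> forall i : Idx d,
     is_derive t (1 : R) (fun s => z s i) (gamma * (- z t i + U (x t) i))) ->
  (* D_h(xbar, x(t)) is taken with grad h(x(t)) := z(t)/eps (in dh(x(t))) *)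
  let D (t : R) := bregman th xbar (x t) (fun i => z t i / eps) in
  (forall i : Idx d, x t i @[t --> +oo] --> xbar i) /\
  (forall t : R, 0 <= t ->
     D t <= expR (- (gamma * (eps - mu) / eps * t)) * D 0) /\
  (forall t : R, 0 <= t ->
     sqnorm (vsub xbar (x t)) <=
       2 / rho * expR (- (gamma * (eps - mu) / eps * t)) * D 0) /\
  (mu = 0 -> forall t : R, 0 <= t ->
     sqnorm (vsub xbar (x t)) <= 2 / rho * expR (- (gamma * t)) * D 0).
Proof.
move=> [Hom _] rho0 reg eps0 hmono _ hbar _ gam0 mue hz zc zd D.
have cvx : forall p, Defs.convex_set (Om p) by move=> p; case: (Hom p) => _ [].
have Db := D_bound Om th rho eps rho0 eps0 reg cvx.
set k := gamma * (eps - mu) / eps.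
have k0 : 0 < k by rewrite /k divr_gt0 // mulr_gt0 // subr_gt0.
pose v (t : R) := dotv (fun i => gamma * (- z t i + U (x t) i)) (fun i => (x t i - xbar i) / eps).
have HD : forall t : R, 0 < t -> is_derive t 1 D (v t).
  move=> t t0; apply: (@deriv_by_bound _ _ D z t (1 / (eps * eps * rho))) => //.
    by move=> i; exact: zd.
  move=> s s0; exact: (Db _ _ _ _ xbar (hz s s0) (hz t (ltW t0))).
have Dge0 : forall t : R, 0 <= t -> rho / 2 * sqnorm (vsub xbar (x t)) <= D t.
  move=> t t0.
  exact: (strong_bregman Om th rho reg cvx (mirror_subgrad Om th eps eps0 (hz t t0)) (mirror_full Om th eps hbar).1).
have Hneg : forall t : R, 0 < t -> v t + k * D t <= 0.
  move=> t t0.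
  have Ht := hz t (ltW t0).
  have g := mirror_subgrad Om th eps eps0 Ht.
  have gb := mirror_subgrad Om th eps eps0 hbar.
  have hm := hmono _ _ _ _ g gb.
  have D2 := strong_bregman Om th rho reg cvx gb g.1.
  have eD : D t = bregman th xbar (x t) (fun i => z t i / eps) by [].
  rewrite -eD in hm.
  set D2v := bregman th (x t) xbar _ in hm D2.
  have D2ge0 : 0 <= D2v.
    apply: le_trans D2; apply: mulr_ge0; last exact: sqnorm_ge0.
    by rewrite divr_ge0 // ltW.
  set dx := vsub (x t) xbar.
  have ev : v t = gamma / eps * (dotv (U (x t)) dx - dotv (z t) dx).
    rewrite /v /dotv -sumrB mulr_sumr; apply: eq_bigr => i _; rewrite /dx /vsub.
    by field; rewrite (gt_eqF eps0).
  have E1 : eps * (D t + D2v) = dotv (z t) dx - dotv (U xbar) dx.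
    rewrite eD /D2v /bregman !dotv_divl /dx !dotvBr.
    by field; rewrite (gt_eqF eps0).
  rewrite dotvBl in hm.
  set M1 := dotv (U (x t)) dx in ev hm *.
  set M2 := dotv (U xbar) dx in E1 hm *.
  set M3 := dotv (z t) dx in ev E1 *.
  set D1 := D t in E1 hm *.
  have inner : (eps - mu) * D1 + (M1 - M3) <= 0.
    have dm : 0 <= eps - mu by rewrite subr_ge0 ltW.
    have := mulr_ge0 dm D2ge0.
    nra.
  have -> : v t + k * D1 = gamma / eps * ((eps - mu) * D1 + (M1 - M3)).
    by rewrite ev /k; field; rewrite (gt_eqF eps0).
  apply: mulr_ge0_le0 => //; rewrite divr_ge0 // ltW //.
pose F (t : R) := expR (k * t) * D t.
have he : forall t : R, is_derive t 1 (fun s => expR (k * s)) (expR (k * t) * k).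
  move=> t; exact: (@is_derive1_comp R expR (fun s => k * s) t (expR (k * t)) k
    (is_derive_expR _) (is_derive_lin k t)).
have HF : forall t : R, 0 < t ->
    is_derive t 1 F (expR (k * t) * v t + D t * (expR (k * t) * k)).
  move=> t t0; exact: (is_deriveM' (he t) (HD t t0)).
have F' : forall t : R, 0 < t -> F^`() t <= 0.
  move=> t t0; rewrite derive1E; case: (HF t t0) => _ ->.
  have -> : expR (k * t) * v t + D t * (expR (k * t) * k) =
            expR (k * t) * (v t + k * D t) by ring.
  exact: mulr_ge0_le0 (ltW (expR_gt0 _)) (Hneg t t0).
have Fcont : {within `[0, +oo[, continuous F}.
  apply/continuous_within_itvcyP; split.
    move=> t; rewrite in_itv /= andbT => t0.
    apply/differentiable_continuous/derivable1_diffP.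
    by case: (HF t t0).
  have c1 : expR (k * s) @[s --> 0^'+] --> expR (k * 0).
    apply: cvg_within_filter.
    have : differentiable (fun s => expR (k * s)) 0.
      by apply/derivable1_diffP; case: (he 0).
    move/differentiable_continuous; exact.
  have c2 : D s @[s --> 0^'+] --> D 0.
    apply: (@cont_by_bound _ _ _ _ _ D z 0 (1 / (eps * eps * rho))
              (fun i => (x 0 i - xbar i) / eps) id).
      by move=> i; exact: zc.
    near=> s.
    have s0 : 0 < s by near: s; exact: nbhs_right_gt.
    exact: (Db _ _ _ _ xbar (hz s (ltW s0)) (hz 0 (lexx 0))).
  have := cvgM c1 c2; exact.
have Fdec : forall t : R, 0 <= t -> F t <= F 0.
  have hd : forall s : R, s \in `]0, +oo[%R -> derivable F s 1.
    move=> s; rewrite in_itv /= andbT => s0; by case: (HF s s0).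
  have hl : forall s : R, s \in `]0, +oo[%R -> F^`() s <= 0.
    move=> s; rewrite in_itv /= andbT => s0; exact: F' s s0.
  move=> t t0; exact: (@ler0_derive1_nincry R F 0 hd hl Fcont 0 t (lexx 0) t0).
have Hdecay : forall t : R, 0 <= t -> D t <= expR (- (k * t)) * D 0.
  move=> t t0; have := Fdec t t0; rewrite /F mulr0 expR0 mul1r => h.
  have -> : D t = expR (- (k * t)) * (expR (k * t) * D t).
    by rewrite mulrA -expRD addNr expR0 mul1r.
  by apply: ler_wpM2l => //; exact: ltW (expR_gt0 _).
have Hsq : forall t : R, 0 <= t ->
    sqnorm (vsub xbar (x t)) <= 2 / rho * expR (- (k * t)) * D 0.
  move=> t t0.
  have h1 := Dge0 t t0; have h2 := Hdecay t t0.
  have e : 2 / rho * (rho / 2 * sqnorm (vsub xbar (x t))) = sqnorm (vsub xbar (x t)).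
    by field; rewrite (gt_eqF rho0).
  have r0 : 0 <= 2 / rho by rewrite divr_ge0 // ltW.
  have h3 : sqnorm (vsub xbar (x t)) <= 2 / rho * D t.
    by rewrite -{1}e; apply: ler_wpM2l.
  have h4 : 2 / rho * D t <= 2 / rho * (expR (- (k * t)) * D 0) by apply: ler_wpM2l.
  rewrite mulrA in h4.
  exact: le_trans h3 h4.
have D00 : 0 <= D 0.
  apply: le_trans (Dge0 0 (lexx 0)); apply: mulr_ge0; last exact: sqnorm_ge0.
  by rewrite divr_ge0 // ltW.
split.
  move=> i; apply: (@cvg_from_exp _ (fun t => x t i) (xbar i) (2 / rho * D 0) k) => //.
    by rewrite mulr_ge0 // divr_ge0 // ltW.
  move=> t t0; apply: le_trans (sq_le_sqnorm (vsub xbar (x t)) i) _.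
  by rewrite mulrAC; exact: Hsq.
split; first exact: Hdecay.
split; first exact: Hsq.
move=> mu0 t t0; have := Hsq t t0; rewrite /k mu0 subr0 mulfK // gt_eqF //.
Unshelve. all: by end_near.
Qed.
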